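(* Let $a>0$ be a constant and consider the (3+1)-dimensional Zakharov–Kuznetsov equation $$u_t + a\,u\,u_x + u_{xx} + u_{yy} + u_{zz} = 0$$ for $u=u(x,y,z,t)$. The infinitesimal generators $\xi_x\partial_x+\xi_y\partial_y+\xi_z\partial_z+\xi_t\partial_t+\xi_u\partial_u$ of the one-parameter Lie groups of point transformations $(x,y,z,t,u)\mapsto(\hat x,\hat y,\hat z,\hat t,\hat u)$ leaving this equation invariant are exactly those with $$\xi_x=\tfrac{c_1x}{2}+c_5t+c_6,\quad \xi_y=\tfrac{c_1y}{2}+c_3z+c_4,\quad \xi_z=-c_3y+\tfrac{c_1z}{2}+c_7,\quad \xi_t=c_1t+c_2,\quad \xi_u=-\tfrac{c_1u}{2}+\tfrac{c_5}{a},$$ where $c_1,\dots,c_7$ are arbitrary real constants. Equivalently, the Lie algebra of point symmetries is spanned by $\mathfrak{D}_1=\frac{x}{2}\partial_x+\frac{y}{2}\partial_y+\frac{z}{2}\partial_z+t\partial_t-\frac{u}{2}\partial_u$, $\mathfrak{D}_2=\partial_t$, $\mathfrak{D}_3=z\partial_y-y\partial_z$, $\mathfrak{D}_4=\partial_y$, $\mathfrak{D}_5=t\partial_x+\frac{1}{a}\partial_u$, $\mathfrak{D}_6=\partial_x$, $\mathfrak{D}_7=\partial_z$.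
   Context: A vector field $\mathbb{Z}$ on the space of variables $(x,y,z,t,u)$ is an infinitesimal (point) symmetry of the equation $\Delta:=u_t+auu_x+u_{xx}+u_{yy}+u_{zz}=0$ if its second prolongation $\mathrm{Pr}^{(2)}\mathbb{Z}$ satisfies $\mathrm{Pr}^{(2)}\mathbb{Z}(\Delta)=0$ whenever $\Delta=0$. *)

(* Defs.v *)
From HB Require Import structures.
From mathcomp Require Import all_boot all_order all_algebra.
From mathcomp Require Import all_classical all_reals all_analysis.
Set Implicit Arguments. Unset Strict Implicit. Unset Printing Implicit Defensive.
Import Order.TTheory GRing.Theory Num.Theory.
Import numFieldNormedType.Exports.
Local Open Scope ring_scope.

Section ZK.
Variable R : realType.

(* the space of variables (x,y,z,t,u); coordinates 0,1,2,3,4 *)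
Definition V5 := 'rV[R]_5.
Definition ev (k : 'I_5) : V5 := delta_mx 0 k.
Definition pt (x y z t u : R) : V5 := \row_(k < 5) nth 0 [:: x; y; z; t; u] k.

Definition pd (k : 'I_5) (f : V5 -> R) : V5 -> R := fun p => 'D_(ev k) f p.

Fixpoint Cn (n : nat) (f : V5 -> R) : Prop :=
  match n with
  | 0 => continuous f
  | n'.+1 => continuous f /\ (forall k p, derivable f p (ev k)) /\
             (forall k, Cn n' (pd k f))
  end.
Definition smooth (f : V5 -> R) : Prop := forall n, Cn n f.

(* independent variables x,y,z,t are indexed by 'I_4; u is coordinate 4 *)
Definition iv (i : 'I_4) : 'I_5 := widen_ord (leqnSn 4) i.
Definition uu : 'I_5 := ord_max.
Definition ix : 'I_4 := @Ordinal 4 0 isT.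
Definition iy : 'I_4 := @Ordinal 4 1 isT.
Definition iz : 'I_4 := @Ordinal 4 2 isT.
Definition it : 'I_4 := @Ordinal 4 3 isT.

(* Second-order jet coordinates: a base point p, first derivatives u1 i = u_i,
   second derivatives u2 i j = u_ij (symmetric). *)

Definition TD1 (F : V5 -> R) (u1 : 'I_4 -> R) (i : 'I_4) (p : V5) : R :=
  pd (iv i) F p + u1 i * pd uu F p.
Definition TD2 (F : V5 -> R) (u1 : 'I_4 -> R) (u2 : 'I_4 -> 'I_4 -> R)
    (i j : 'I_4) (p : V5) : R :=
  pd (iv i) (pd (iv j) F) p + u1 i * pd uu (pd (iv j) F) p
  + u1 j * pd (iv i) (pd uu F) p + u1 i * u1 j * pd uu (pd uu F) p
  + u2 i j * pd uu F p.

(* coefficients of the second prolongation of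
   Z = sum_i xi_i d_{x^i} + phi d_u :
   phi^i  = D_i phi - sum_k u_k D_i xi_k
   phi^ji = D_i phi^j - sum_k u_jk D_i xi_k  (written out)               *)
Definition pr1 (xi : 'I_4 -> V5 -> R) (phi : V5 -> R) (u1 : 'I_4 -> R)
    (i : 'I_4) (p : V5) : R :=
  TD1 phi u1 i p - \sum_(k < 4) u1 k * TD1 (xi k) u1 i p.
Definition pr2 (xi : 'I_4 -> V5 -> R) (phi : V5 -> R) (u1 : 'I_4 -> R)
    (u2 : 'I_4 -> 'I_4 -> R) (i j : 'I_4) (p : V5) : R :=
  TD2 phi u1 u2 i j p
  - \sum_(k < 4) (u1 k * TD2 (xi k) u1 u2 i j p + u2 i k * TD1 (xi k) u1 j p
                  + u2 j k * TD1 (xi k) u1 i p).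

Definition zk (a : R) (p : V5) (u1 : 'I_4 -> R) (u2 : 'I_4 -> 'I_4 -> R) : R :=
  u1 it + a * p 0 uu * u1 ix + u2 ix ix + u2 iy iy + u2 iz iz.

(* Pr^(2) Z (Delta), written out: Delta depends on u, u_t, u_x, u_xx, u_yy, u_zz *)
Definition prZK (a : R) (xi : 'I_4 -> V5 -> R) (phi : V5 -> R) (p : V5)
    (u1 : 'I_4 -> R) (u2 : 'I_4 -> 'I_4 -> R) : R :=
  pr1 xi phi u1 it p + a * phi p * u1 ix + a * p 0 uu * pr1 xi phi u1 ix p
  + pr2 xi phi u1 u2 ix ix p + pr2 xi phi u1 u2 iy iy p + pr2 xi phi u1 u2 iz iz p.

Definition is_symmetry (a : R) (xi : 'I_4 -> V5 -> R) (phi : V5 -> R) : Prop :=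
  forall (p : V5) (u1 : 'I_4 -> R) (u2 : 'I_4 -> 'I_4 -> R),
    (forall i j, u2 i j = u2 j i) ->
    zk a p u1 u2 = 0 -> prZK a xi phi p u1 u2 = 0.

End ZK.

(* Main.v *)
Require Import Defs.
From HB Require Import structures.
From mathcomp Require Import all_boot all_order all_algebra.
From mathcomp Require Import all_classical all_reals all_analysis.
From mathcomp Require Import ring lra.
Import Order.TTheory GRing.Theory Num.Theory.
Import numFieldNormedType.Exports.
Local Open Scope classical_set_scope.
Local Open Scope ring_scope.

Section Tools.
Variable R : realType.
Local Notation V := (V5 R).

Lemma derive_quot_eq (U1 U2 : normedModType R) (f : U1 -> R) (g : U2 -> R)
   (q v : U1) (q' w : U2) :
  (forall h : R, f (h *: v + q) - f q = g (h *: w + q') - g q') ->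
  'D_v f q = 'D_w g q' /\ (derivable f q v <-> derivable g q' w).
Proof.
move=> H.
have E : (fun h : R => h^-1 *: ((f \o shift q) (h *: v) - f q)) =
         (fun h : R => h^-1 *: ((g \o shift q') (h *: w) - g q')).
  by apply: funext => h /=; rewrite H.
by rewrite /derive /derivable E.
Qed.
Arguments derive_quot_eq {U1 U2 f g q v q' w}.

Lemma pd_shift (f : V -> R) j (c : V) d q :
  (forall q, f (q + c) = f q + d) -> pd j f (q + c) = pd j f q.
Proof.
move=> H; rewrite /pd.
suff H' : forall h : R, f (h *: ev R j + (q + c)) - f (q + c) =
   f (h *: ev R j + q) - f q by case: (derive_quot_eq H').
by move=> h; rewrite addrA !H; ring.
Qed.

Lemma pd_lin (f : V -> R) k q c :
  (forall h, f (q + h *: ev R k) = f q + c * h) -> pd k f q = c.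
Proof.
move=> H; rewrite /pd.
have [-> _] := @derive_quot_eq _ _ f (fun h : R => c * h) q (ev R k) 0 1
   (fun h => ltac:(rewrite (addrC (h *: _) q) H addr0 mulr0 subr0 /GRing.scale /= mulr1; ring)).
have -> : (fun h : R => c * h) = c *: (@id R) by apply: funext => h.
rewrite deriveZ ?derive_id; last exact: derivable_id.
by rewrite /GRing.scale /= mulr1.
Qed.

Lemma pd_inv0 (f : V -> R) k q :
  (forall h, f (q + h *: ev R k) = f q) -> pd k f q = 0.
Proof. by move=> H; apply: pd_lin => h; rewrite H mul0r addr0. Qed.

Lemma line_eq (f : V -> R) (k : 'I_5) (q : V) (s : R) :
  'D_1 (fun s : R => f (q + s *: ev R k)) s = pd k f (q + s *: ev R k) /\
  (derivable (fun s : R => f (q + s *: ev R k)) s 1 <->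
   derivable f (q + s *: ev R k) (ev R k)).
Proof.
rewrite /pd; apply: derive_quot_eq => h /=.
by rewrite /GRing.scale /= mulr1 -/(GRing.scale _ _) scalerDl addrCA addrA.
Qed.


Lemma line_int (f : V -> R) (k : 'I_5) (q : V) (c : R) :
  (forall s : R, derivable f (q + s *: ev R k) (ev R k)) ->
  (forall s : R, pd k f (q + s *: ev R k) = c) ->
  forall s : R, f (q + s *: ev R k) = f q + c * s.
Proof.
move=> Hd Hc s.
pose A := fun s : R => f (q + s *: ev R k).
have D : forall x : R, is_derive x (1:R) (A - c *: (@id R)) 0.
  move=> x; have [E1 E2] := line_eq f k q x.
  have I1 : is_derive x 1 A c.
    by rewrite -(Hc x) -E1; apply: derivableP; apply/E2.
  apply: is_derive_eq.
  by rewrite /GRing.scale /= mulr1 subrr.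
have E := is_derive_0_is_cst s 0 D.
have E' : A s - c * s = A 0 - c * 0 by exact: E.
move: E'; rewrite /A scale0r addr0 mulr0 subr0 => <-; ring.
Qed.


Lemma line_cont (g : V -> R) (i : 'I_5) (q : V) :
  (forall s : R, derivable g (q + s *: ev R i) (ev R i)) ->
  continuous (fun s : R => g (q + s *: ev R i)).
Proof.
move=> Hd r; apply/differentiable_continuous/derivable1_diffP.
by apply/(line_eq g i q r).2.
Qed.

Lemma line_mvt (g : V -> R) (i : 'I_5) (q : V) (h : R) :
  (forall s : R, derivable g (q + s *: ev R i) (ev R i)) ->
  exists2 t : R, `|t| <= `|h| & g (q + h *: ev R i) - g q = pd i g (q + t *: ev R i) * h.
Proof.
move=> Hd.
pose A := fun s : R => g (q + s *: ev R i).
have D : forall x : R, is_derive x (1:R) A (pd i g (q + x *: ev R i)).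
  move=> x; have [E1 E2] := line_eq g i q x.
  by rewrite -E1; apply: derivableP; apply/E2.
have C : forall a b : R, {within `[a, b], continuous A}.
  by move=> a b; apply/continuous_subspaceT; apply: line_cont.
have [hge0|hlt0] := leP 0 h.
  have [t tI E] := MVT_segment hge0 (fun x _ => D x) (C 0 h).
  move: tI; rewrite in_itv /= => /andP[t0 th].
  exists t; first by rewrite !ger0_norm // (le_trans t0 th).
  by move: E; rewrite /A scale0r addr0 subr0.
have [t tI E] := MVT_segment (ltW hlt0) (fun x _ => D x) (C h 0).
move: tI; rewrite in_itv /= => /andP[t0 th].
exists t.
  by rewrite (ler0_norm th) (ltr0_norm hlt0); lra.
move: E; rewrite /A scale0r addr0 => E; lra.
Qed.


Lemma pd_shiftf (f : V -> R) j (c q : V) :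
  pd j (fun q => f (q + c)) q = pd j f (q + c) /\
  (derivable (fun q => f (q + c)) q (ev R j) <-> derivable f (q + c) (ev R j)).
Proof. by rewrite /pd; apply: derive_quot_eq => h; rewrite addrA. Qed.

Lemma pd_sub (f g : V -> R) j q :
  derivable f q (ev R j) -> derivable g q (ev R j) ->
  pd j (fun q => f q - g q) q = pd j f q - pd j g q /\
  derivable (fun q => f q - g q) q (ev R j).
Proof.
move=> df dg; rewrite /pd.
have -> : (fun q => f q - g q) = f - g by [].
by split; [apply: deriveB | apply: derivableB].
Qed.

Lemma double_diff (f : V -> R) (i l : 'I_5) (p : V) (h : R) :
  (forall q, derivable f q (ev R i)) -> (forall q, derivable (pd i f) q (ev R l)) ->
  exists t1, exists t2, [/\ `|t1| <= `|h|, `|t2| <= `|h| &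
   f (p + h *: ev R i + h *: ev R l) - f (p + h *: ev R l) - f (p + h *: ev R i) + f p
   = pd l (pd i f) (p + t1 *: ev R i + t2 *: ev R l) * h * h].
Proof.
move=> Df DDf.
pose g := fun q => f (q + h *: ev R l) - f q.
have Dg : forall q, derivable g q (ev R i) /\
    pd i g q = pd i f (q + h *: ev R l) - pd i f q.
  move=> q.
  have [E1 E2] := pd_shiftf f i (h *: ev R l) q.
  have [E3 E4] := @pd_sub (fun q => f (q + h *: ev R l)) f i q (E2.2 (Df _)) (Df q).
  by split => //; rewrite /g E3 E1.
have [t1 t1h E] := line_mvt g i p h (fun s => (Dg (p + s *: ev R i)).1).
have [t2 t2h E'] := line_mvt (pd i f) l (p + t1 *: ev R i) h (fun s => DDf (p + t1 *: ev R i + s *: ev R l)).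
exists t1, t2; split => //.
rewrite -E' -(Dg _).2 -E /g.
rewrite (addrAC p (h *: ev R i)); ring.
Qed.


Lemma nev i : `|ev R i| <= 1.
Proof.
rewrite /Num.norm /= mx_normrE.
apply: bigmax_le => // -[a b] _ /=; rewrite /ev mxE.
by case: (_ && _); rewrite ?normr1 ?normr0.
Qed.

Lemma nsev (s : R) i : `|s *: ev R i| <= `|s|.
Proof. by rewrite normrZ ler_piMr ?nev. Qed.

Lemma near_pt (p : V) (j k : 'I_5) (t1 t2 h r : R) :
  `|t1| <= `|h| -> `|t2| <= `|h| -> 4 * `|h| <= r -> 0 < r ->
  ball p r (p + t1 *: ev R j + t2 *: ev R k).
Proof.
move=> H1 H2 H3 r0; rewrite -ball_normE /ball_ /=.
have -> : p - (p + t1 *: ev R j + t2 *: ev R k) = - (t1 *: ev R j + t2 *: ev R k).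
  by rewrite -addrA opprD addrA subrr add0r.
rewrite normrN.
apply: le_lt_trans (ler_normD _ _) _.
have := nsev t1 j; have := nsev t2 k.
have := normr_ge0 h. lra.
Qed.

Lemma tri_contra (A B X : R) :
  `|A - X| < `|A - B| / 2 -> `|X - B| < `|A - B| / 2 -> False.
Proof. have := ler_normD (A - X) (X - B); rewrite addrA subrK; lra. Qed.

Lemma alg4 (a b c d x y h : R) : h != 0 ->
  a - b - c + d = x * h * h -> a - c - b + d = y * h * h -> x = y.
Proof.
move=> h0 E1 E2; apply: (mulIf h0); apply: (mulIf h0).
by rewrite -E1 -E2; ring.
Qed.
Arguments alg4 {a b c d x y h}.

Lemma schwarz (f : V -> R) (j k : 'I_5) (p : V) :
  (forall q, derivable f q (ev R j)) -> (forall q, derivable f q (ev R k)) ->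
  (forall q, derivable (pd j f) q (ev R k)) -> (forall q, derivable (pd k f) q (ev R j)) ->
  continuous (pd k (pd j f)) -> continuous (pd j (pd k f)) ->
  pd k (pd j f) p = pd j (pd k f) p.
Proof.
move=> Dj Dk Djk Dkj C1 C2.
pose A := pd k (pd j f) p; pose B := pd j (pd k f) p.
have [AB|nAB] := eqVneq A B; first exact: AB.
exfalso.
pose e := `|A - B| / 2.
have e0 : 0 < e by rewrite /e divr_gt0 // normr_gt0 subr_eq0.
have /nbhs_ballP [r1 r10 H1] := @cvgr_dist_lt _ _ _ _ (nbhs_filter p) _ _ (C1 p) _ e0.
have /nbhs_ballP [r2 r20 H2] := @cvgr_dist_lt _ _ _ _ (nbhs_filter p) _ _ (C2 p) _ e0.
pose h := Num.min r1 r2 / 4.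
have h0 : 0 < h by rewrite /h divr_gt0 // lt_min r10 r20.
have hr1 : 4 * `|h| <= r1 by rewrite gtr0_norm // /h mulrC divfK // ge_min lexx.
have hr2 : 4 * `|h| <= r2 by rewrite gtr0_norm // /h mulrC divfK // ge_min lexx orbT.
have [t1 [t2 [t1h t2h E1]]] := double_diff f j k p h Dj Djk.
have [s1 [s2 [s1h s2h E2]]] := double_diff f k j p h Dk Dkj.
have E : pd k (pd j f) (p + t1 *: ev R j + t2 *: ev R k) =
         pd j (pd k f) (p + s1 *: ev R k + s2 *: ev R j).
  rewrite (addrAC p (h *: ev R j)) in E1; move: E1 E2.
  move=> E1 E2; exact (alg4 (lt0r_neq0 h0) E1 E2).
have := H1 _ (near_pt p j k _ _ _ _ t1h t2h hr1 r10); rewrite /= E.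
have := H2 _ (near_pt p k j _ _ _ _ s1h s2h hr2 r20) => /=.
move=> L2 L1; rewrite distrC in L2.
exact (tri_contra _ _ _ L1 L2).
Qed.
End Tools.

Section Ext.
Variable R : realType.
Local Notation V := (V5 R).

Lemma sum4 (F : 'I_4 -> R) : \sum_(k < 4) F k = F ix + F iy + F iz + F it.
Proof.
rewrite !big_ord_recl big_ord0 addr0 !addrA.
by congr (F _ + F _ + F _ + F _); apply: val_inj.
Qed.

Definition mk4 (a b c d : R) : 'I_4 -> R := fun i => nth 0 [:: a; b; c; d] i.
Definition mk44 (xx xy xz xt yy yz yt zz zt tt : R) : 'I_4 -> 'I_4 -> R :=
  fun i j => nth 0 (nth [::] [:: [:: xx; xy; xz; xt]; [:: xy; yy; yz; yt];
                               [:: xz; yz; zz; zt]; [:: xt; yt; zt; tt]] i) j.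

Lemma mk4E a b c d : (mk4 a b c d ix = a) * (mk4 a b c d iy = b) *
  (mk4 a b c d iz = c) * (mk4 a b c d it = d).
Proof. by []. Qed.

Lemma mk44E xx xy xz xt yy yz yt zz zt tt :
  let M := mk44 xx xy xz xt yy yz yt zz zt tt in
  (M ix ix = xx) * (M ix iy = xy) * (M ix iz = xz) * (M ix it = xt) *
  (M iy ix = xy) * (M iy iy = yy) * (M iy iz = yz) * (M iy it = yt) *
  (M iz ix = xz) * (M iz iy = yz) * (M iz iz = zz) * (M iz it = zt) *
  (M it ix = xt) * (M it iy = yt) * (M it iz = zt) * (M it it = tt).
Proof. by []. Qed.

Lemma mk4x a b c d : mk4 a b c d ix = a. Proof. by []. Qed.
Lemma mk4y a b c d : mk4 a b c d iy = b. Proof. by []. Qed.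
Lemma mk4z a b c d : mk4 a b c d iz = c. Proof. by []. Qed.
Lemma mk4t a b c d : mk4 a b c d it = d. Proof. by []. Qed.

Lemma pr1E xi phi u1 i (p : V) : pr1 xi phi u1 i p = TD1 phi u1 i p -
  (u1 ix * TD1 (xi ix) u1 i p + u1 iy * TD1 (xi iy) u1 i p +
   u1 iz * TD1 (xi iz) u1 i p + u1 it * TD1 (xi it) u1 i p).
Proof. by rewrite /pr1 sum4. Qed.

Lemma pr2E xi phi u1 u2 i j (p : V) : pr2 xi phi u1 u2 i j p = TD2 phi u1 u2 i j p -
  ((u1 ix * TD2 (xi ix) u1 u2 i j p + u2 i ix * TD1 (xi ix) u1 j p + u2 j ix * TD1 (xi ix) u1 i p) +
   (u1 iy * TD2 (xi iy) u1 u2 i j p + u2 i iy * TD1 (xi iy) u1 j p + u2 j iy * TD1 (xi iy) u1 i p) +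
   (u1 iz * TD2 (xi iz) u1 u2 i j p + u2 i iz * TD1 (xi iz) u1 j p + u2 j iz * TD1 (xi iz) u1 i p) +
   (u1 it * TD2 (xi it) u1 u2 i j p + u2 i it * TD1 (xi it) u1 j p + u2 j it * TD1 (xi it) u1 i p)).
Proof. by rewrite /pr2 sum4. Qed.

Variables (a : R) (xi : 'I_4 -> V -> R) (phi : V -> R).
Hypothesis Hs : is_symmetry a xi phi.

Lemma HS p ux uy uz xx xy xz xt yy yz yt zz zt tt :
  prZK a xi phi p (mk4 ux uy uz (-(a * p 0 uu * ux + xx + yy + zz)))
    (mk44 xx xy xz xt yy yz yt zz zt tt) = 0.
Proof.
apply: Hs.
  by move=> [[|[|[|[|i]]]] Hi] [[|[|[|[|j]]]] Hj].
by rewrite /zk !mk4E !mk44E; ring.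
Qed.


Ltac expand H := rewrite /prZK !pr1E !pr2E /TD1 /TD2 !mk4x !mk4y !mk4z !mk4t !mk44E in H.
Ltac fin p := repeat match goal with H : _ = _ |- _ => revert H end;
  generalize (p 0 uu) (phi p);
  repeat match goal with |- context [pd ?k ?f ?q] => generalize (pd k f q) end;
  intros; subst; lra.

Lemma X1 p : pd (iv ix) (xi it) p = 0.
Proof.
have H0 := HS p 0 0 0 0 0 0 0 0 0 0 0 0 0.
have H1 := HS p 0 0 0 0 0 0 1 0 0 0 0 0 0.
expand H0.
expand H1.
fin p.
Qed.

Lemma X2 p : pd (iv iy) (xi it) p = 0.
Proof.
have H0 := HS p 0 0 0 0 0 0 0 0 0 0 0 0 0.
have H1 := HS p 0 0 0 0 0 0 0 0 0 1 0 0 0.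
expand H0.
expand H1.
fin p.
Qed.

Lemma X3 p : pd (iv iz) (xi it) p = 0.
Proof.
have H0 := HS p 0 0 0 0 0 0 0 0 0 0 0 0 0.
have H1 := HS p 0 0 0 0 0 0 0 0 0 0 0 1 0.
expand H0.
expand H1.
fin p.
Qed.

Lemma X4 p : pd uu (xi it) p = 0.
Proof.
have H0 := HS p 0 1 0 0 0 0 0 0 0 0 0 0 0.
have H1 := HS p 0 1 0 0 0 0 0 0 0 1 0 0 0.
have H2 := HS p 0 0 0 0 0 0 0 0 0 0 0 0 0.
have H3 := HS p 0 0 0 0 0 0 0 0 0 1 0 0 0.
expand H0.
expand H1.
expand H2.
expand H3.
fin p.
Qed.

Lemma X5 p : pd (iv ix) (xi iy) p + pd (iv iy) (xi ix) p = 0.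
Proof.
have H0 := HS p 0 0 0 0 0 0 0 0 0 0 0 0 0.
have H1 := HS p 0 0 0 0 1 0 0 0 0 0 0 0 0.
expand H0.
expand H1.
fin p.
Qed.

Lemma X6 p : pd uu (xi ix) p = 0.
Proof.
have H0 := HS p 0 1 0 0 0 0 0 0 0 0 0 0 0.
have H1 := HS p 0 1 0 0 1 0 0 0 0 0 0 0 0.
have H2 := HS p 0 0 0 0 0 0 0 0 0 0 0 0 0.
have H3 := HS p 0 0 0 0 1 0 0 0 0 0 0 0 0.
expand H0.
expand H1.
expand H2.
expand H3.
fin p.
Qed.

Lemma X7 p : pd (iv ix) (xi iz) p + pd (iv iz) (xi ix) p = 0.
Proof.
have H0 := HS p 0 0 0 0 0 0 0 0 0 0 0 0 0.
have H1 := HS p 0 0 0 0 0 1 0 0 0 0 0 0 0.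
expand H0.
expand H1.
fin p.
Qed.

Lemma X8 p : pd (iv iy) (xi iz) p + pd (iv iz) (xi iy) p = 0.
Proof.
have H0 := HS p 0 0 0 0 0 0 0 0 0 0 0 0 0.
have H1 := HS p 0 0 0 0 0 0 0 0 1 0 0 0 0.
expand H0.
expand H1.
fin p.
Qed.

Lemma X9 p : pd uu (xi iz) p = 0.
Proof.
have H0 := HS p 0 1 0 0 0 0 0 0 0 0 0 0 0.
have H1 := HS p 0 1 0 0 0 0 0 0 1 0 0 0 0.
have H2 := HS p 0 0 0 0 0 0 0 0 0 0 0 0 0.
have H3 := HS p 0 0 0 0 0 0 0 0 1 0 0 0 0.
expand H0.
expand H1.
expand H2.
expand H3.
fin p.
Qed.

Lemma X10 p : pd uu (xi iy) p = 0.
Proof.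
have H0 := HS p 0 0 1 0 0 0 0 0 0 0 0 0 0.
have H1 := HS p 0 0 1 0 0 0 0 0 1 0 0 0 0.
have H2 := HS p 0 0 0 0 0 0 0 0 0 0 0 0 0.
have H3 := HS p 0 0 0 0 0 0 0 0 1 0 0 0 0.
expand H0.
expand H1.
expand H2.
expand H3.
fin p.
Qed.

Lemma X11ix p (h1 : pd (iv ix) (xi it) p = 0) (h2 : pd uu (xi it) p = 0) (h3 : pd (iv ix) (pd (iv ix) (xi it)) p = 0) (h4 : pd (iv iy) (pd (iv iy) (xi it)) p = 0) (h5 : pd (iv iz) (pd (iv iz) (xi it)) p = 0) : pd (iv it) (xi it) p = 2 * pd (iv ix) (xi ix) p.
Proof.
have H0 := HS p 0 0 0 0 0 0 0 0 0 0 0 0 0.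
have H1 := HS p 0 0 0 1 0 0 0 0 0 0 0 0 0.
have H2 := HS p 0 0 0 (-1) 0 0 0 0 0 0 0 0 0.
expand H0.
expand H1.
expand H2.
fin p.
Qed.

Lemma X11iy p (h1 : pd (iv ix) (xi it) p = 0) (h2 : pd uu (xi it) p = 0) (h3 : pd (iv ix) (pd (iv ix) (xi it)) p = 0) (h4 : pd (iv iy) (pd (iv iy) (xi it)) p = 0) (h5 : pd (iv iz) (pd (iv iz) (xi it)) p = 0) : pd (iv it) (xi it) p = 2 * pd (iv iy) (xi iy) p.
Proof.
have H0 := HS p 0 0 0 0 0 0 0 0 0 0 0 0 0.
have H1 := HS p 0 0 0 0 0 0 0 1 0 0 0 0 0.
have H2 := HS p 0 0 0 0 0 0 0 (-1) 0 0 0 0 0.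
expand H0.
expand H1.
expand H2.
fin p.
Qed.

Lemma X11iz p (h1 : pd (iv ix) (xi it) p = 0) (h2 : pd uu (xi it) p = 0) (h3 : pd (iv ix) (pd (iv ix) (xi it)) p = 0) (h4 : pd (iv iy) (pd (iv iy) (xi it)) p = 0) (h5 : pd (iv iz) (pd (iv iz) (xi it)) p = 0) : pd (iv it) (xi it) p = 2 * pd (iv iz) (xi iz) p.
Proof.
have H0 := HS p 0 0 0 0 0 0 0 0 0 0 0 0 0.
have H1 := HS p 0 0 0 0 0 0 0 0 0 0 1 0 0.
have H2 := HS p 0 0 0 0 0 0 0 0 0 0 (-1) 0 0.
expand H0.
expand H1.
expand H2.
fin p.
Qed.

Lemma X12iy p : - pd (iv it) (xi iy) p - a * p 0 uu * pd (iv ix) (xi iy) p + pd uu (pd (iv iy) phi) p + pd (iv iy) (pd uu phi) p - (pd (iv ix) (pd (iv ix) (xi iy)) p + pd (iv iy) (pd (iv iy) (xi iy)) p + pd (iv iz) (pd (iv iz) (xi iy)) p) = 0.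
Proof.
have H0 := HS p 0 0 0 0 0 0 0 0 0 0 0 0 0.
have H1 := HS p 0 1 0 0 0 0 0 0 0 0 0 0 0.
have H2 := HS p 0 (-1) 0 0 0 0 0 0 0 0 0 0 0.
have H3 := HS p 0 2 0 0 0 0 0 0 0 0 0 0 0.
expand H0.
expand H1.
expand H2.
expand H3.
fin p.
Qed.

Lemma X12iz p : - pd (iv it) (xi iz) p - a * p 0 uu * pd (iv ix) (xi iz) p + pd uu (pd (iv iz) phi) p + pd (iv iz) (pd uu phi) p - (pd (iv ix) (pd (iv ix) (xi iz)) p + pd (iv iy) (pd (iv iy) (xi iz)) p + pd (iv iz) (pd (iv iz) (xi iz)) p) = 0.
Proof.
have H0 := HS p 0 0 0 0 0 0 0 0 0 0 0 0 0.
have H1 := HS p 0 0 1 0 0 0 0 0 0 0 0 0 0.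
have H2 := HS p 0 0 (-1) 0 0 0 0 0 0 0 0 0 0.
have H3 := HS p 0 0 2 0 0 0 0 0 0 0 0 0 0.
expand H0.
expand H1.
expand H2.
expand H3.
fin p.
Qed.

Lemma X13 p : pd uu (pd uu phi) p - pd uu (pd (iv iy) (xi iy)) p - pd (iv iy) (pd uu (xi iy)) p = 0.
Proof.
have H0 := HS p 0 0 0 0 0 0 0 0 0 0 0 0 0.
have H1 := HS p 0 1 0 0 0 0 0 0 0 0 0 0 0.
have H2 := HS p 0 (-1) 0 0 0 0 0 0 0 0 0 0 0.
have H3 := HS p 0 2 0 0 0 0 0 0 0 0 0 0 0.
expand H0.
expand H1.
expand H2.
expand H3.
fin p.
Qed.

Lemma X14 p (h1 : pd (iv ix) (xi it) p = 0) (h3 : pd (iv ix) (pd (iv ix) (xi it)) p = 0) (h4 : pd (iv iy) (pd (iv iy) (xi it)) p = 0) (h5 : pd (iv iz) (pd (iv iz) (xi it)) p = 0) : a * p 0 uu * pd (iv it) (xi it) p - pd (iv it) (xi ix) p + a * phi p - a * p 0 uu * pd (iv ix) (xi ix) p + pd uu (pd (iv ix) phi) p + pd (iv ix) (pd uu phi) p - (pd (iv ix) (pd (iv ix) (xi ix)) p + pd (iv iy) (pd (iv iy) (xi ix)) p + pd (iv iz) (pd (iv iz) (xi ix)) p) = 0.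
Proof.
have H0 := HS p 0 0 0 0 0 0 0 0 0 0 0 0 0.
have H1 := HS p 1 0 0 0 0 0 0 0 0 0 0 0 0.
have H2 := HS p (-1) 0 0 0 0 0 0 0 0 0 0 0 0.
have H3 := HS p 2 0 0 0 0 0 0 0 0 0 0 0 0.
expand H0.
expand H1.
expand H2.
expand H3.
fin p.
Qed.

Lemma X15 p : pd (iv it) phi p + a * p 0 uu * pd (iv ix) phi p + (pd (iv ix) (pd (iv ix) phi) p + pd (iv iy) (pd (iv iy) phi) p + pd (iv iz) (pd (iv iz) phi) p) = 0.
Proof.
have H0 := HS p 0 0 0 0 0 0 0 0 0 0 0 0 0.
expand H0.
fin p.
Qed.

End Ext.

Section Gen.
Variable R : realType.
Local Notation V := (V5 R).

Lemma sm_der (f : V -> R) : smooth f -> forall k q, derivable f q (ev R k).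
Proof. by move=> sf k q; have [_ [D _]] := sf 1%N. Qed.

Lemma sm_pd (f : V -> R) k : smooth f -> smooth (pd k f).
Proof. by move=> sf n; have [_ [_ C]] := sf n.+1; apply: C. Qed.

Lemma sm_cont (f : V -> R) : smooth f -> continuous f.
Proof. by move=> sf; have := sf 0%N. Qed.

Lemma sch (f : V -> R) j k p : smooth f -> pd k (pd j f) p = pd j (pd k f) p.
Proof.
move=> sf; apply: schwarz; try exact: sm_der.
- by apply: sm_der; apply: sm_pd.
- by apply: sm_der; apply: sm_pd.
- by apply: sm_cont; do 2 apply: sm_pd.
- by apply: sm_cont; do 2 apply: sm_pd.
Qed.

Definition invd k (f : V -> R) := forall q (s : R), f (q + s *: ev R k) = f q.

Lemma inv_of0 (f : V -> R) k : smooth f -> (forall q, pd k f q = 0) -> invd k f.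
Proof.
move=> sf H q s.
rewrite (line_int _ f k q 0 (fun s => sm_der f sf k _) (fun s => H _) s).
by rewrite mul0r addr0.
Qed.

Lemma inv_pdj (f : V -> R) k j : invd k f -> invd k (pd j f).
Proof. by move=> H q s; apply: (pd_shift _ f j (s *: ev R k) 0 q) => q'; rewrite H addr0. Qed.

Lemma pd_of_inv (f : V -> R) k q : invd k f -> pd k f q = 0.
Proof. by move=> H; apply: pd_inv0 => h; rewrite H. Qed.

Lemma pd_zero (g : V -> R) j q : (forall q, g q = 0) -> pd j g q = 0.
Proof. by move=> H; apply: pd_inv0 => h; rewrite !H. Qed.

Lemma pd_aff (f g : V -> R) k (c : R) q : derivable g q (ev R k) ->
  (forall h : R, f (q + h *: ev R k) - c * g (q + h *: ev R k) = f q - c * g q) ->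
  pd k f q = c * pd k g q.
Proof.
move=> dg H; rewrite /pd.
have [-> _] : 'D_(ev R k) f q = 'D_(ev R k) (c *: g) q /\
   (derivable f q (ev R k) <-> derivable (c *: g) q (ev R k)).
  apply: derive_quot_eq => h.
  have := H h; rewrite (addrC q) /GRing.scale /= => E.
  rewrite [X in _ = X](_ : _ = c * (g (h *: ev R k + q) - g q)); last first.
    by rewrite mulrBr.
  rewrite mulrBr; lra.
by rewrite deriveZ.
Qed.

Lemma coord_uu (q : V) (s : R) : (q + s *: ev R uu) 0 uu = q 0 uu + s.
Proof. by rewrite !mxE /= mulr1. Qed.

Lemma coord_iv (q : V) (s : R) i : (q + s *: ev R (iv i)) 0 uu = q 0 uu.
Proof.
rewrite !mxE /=.
have -> : (uu == iv i) = false.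
  apply/negbTE; case: i => [[|[|[|[|i]]]] Hi] //.
by rewrite mulr0 addr0.
Qed.

Lemma pt_dec (x y z t u : R) : pt x y z t u =
  0 + x *: ev R (iv ix) + y *: ev R (iv iy) + z *: ev R (iv iz) + t *: ev R (iv it) + u *: ev R uu.
Proof.
apply/rowP => k; rewrite !mxE /=.
by case: k => [[|[|[|[|[|k]]]]] Hk] //=; rewrite !mulr0 !mulr1 ?add0r ?addr0.
Qed.

Lemma walk (f : V -> R) (c0 c1 c2 c3 c4 : R) : smooth f ->
  (forall q, pd (iv ix) f q = c0) -> (forall q, pd (iv iy) f q = c1) ->
  (forall q, pd (iv iz) f q = c2) -> (forall q, pd (iv it) f q = c3) ->
  (forall q, pd uu f q = c4) ->
  forall x y z t u, f (pt x y z t u) = f 0 + c0 * x + c1 * y + c2 * z + c3 * t + c4 * u.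
Proof.
move=> sf H0 H1 H2 H3 H4 x y z t u.
have L k c q s : (forall q, pd k f q = c) -> f (q + s *: ev R k) = f q + c * s.
  by move=> Hc; apply: line_int => s'; [apply: sm_der | apply: Hc].
rewrite pt_dec (L _ _ _ _ H4) (L _ _ _ _ H3) (L _ _ _ _ H2) (L _ _ _ _ H1) (L _ _ _ _ H0).
ring.
Qed.

End Gen.

Arguments invd {R} k f. Arguments inv_of0 {R f k}. Arguments inv_pdj {R f k j}. Arguments pd_of_inv {R f k q}.
Arguments pd_zero {R g j q}. Arguments pd_aff {R f g k c q}. Arguments sch {R f j k p}.
Arguments sm_der {R f}. Arguments sm_pd {R f k}. Arguments walk {R f c0 c1 c2 c3 c4}.
Arguments pd_inv0 {R f k q}. Arguments pd_lin {R f k q c}.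
Arguments X1 {R a xi phi}.
Arguments X2 {R a xi phi}.
Arguments X3 {R a xi phi}.
Arguments X4 {R a xi phi}.
Arguments X5 {R a xi phi}.
Arguments X6 {R a xi phi}.
Arguments X7 {R a xi phi}.
Arguments X8 {R a xi phi}.
Arguments X9 {R a xi phi}.
Arguments X10 {R a xi phi}.
Arguments X11ix {R a xi phi}.
Arguments X11iy {R a xi phi}.
Arguments X11iz {R a xi phi}.
Arguments X12iy {R a xi phi}.
Arguments X12iz {R a xi phi}.
Arguments X13 {R a xi phi}.
Arguments X14 {R a xi phi}.
Arguments X15 {R a xi phi}.

Section Fwd.
Variable R : realType.
Local Notation V := (V5 R).
Variables (a : R) (xi : 'I_4 -> V -> R) (phi : V -> R).
Hypotheses (ha : 0 < a) (sxi : forall i, smooth (xi i)) (sphi : smooth phi)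
  (Hs : is_symmetry a xi phi).

Local Notation tau := (xi it).
Local Notation X := (xi ix).
Local Notation Y := (xi iy).
Local Notation Z := (xi iz).
Local Notation e0 := (iv ix).
Local Notation e1 := (iv iy).
Local Notation e2 := (iv iz).
Local Notation e3 := (iv it).
Local Notation T := (pd e3 tau).
Local Notation A := (pd uu phi).

Lemma a0 : a != 0. Proof. exact: lt0r_neq0. Qed.

Lemma L1 q : pd e0 tau q = 0. Proof. exact: (X1 Hs q). Qed.
Lemma L2 q : pd e1 tau q = 0. Proof. exact: X2 Hs q. Qed.
Lemma L3 q : pd e2 tau q = 0. Proof. exact: X3 Hs q. Qed.
Lemma L4 q : pd uu tau q = 0. Proof. exact: X4 Hs q. Qed.

Lemma Tinv0 : invd e0 T. Proof. by apply: inv_pdj; apply: inv_of0 (sxi it) L1. Qed.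
Lemma Tinv1 : invd e1 T. Proof. by apply: inv_pdj; apply: inv_of0 (sxi it) L2. Qed.
Lemma Tinv2 : invd e2 T. Proof. by apply: inv_pdj; apply: inv_of0 (sxi it) L3. Qed.
Lemma Tinv4 : invd uu T. Proof. by apply: inv_pdj; apply: inv_of0 (sxi it) L4. Qed.

Lemma hT1 q : pd e0 (pd e0 tau) q = 0. Proof. exact: (pd_zero L1). Qed.
Lemma hT2 q : pd e1 (pd e1 tau) q = 0. Proof. exact: (pd_zero L2). Qed.
Lemma hT3 q : pd e2 (pd e2 tau) q = 0. Proof. exact: (pd_zero L3). Qed.

Lemma L11x q : T q = 2 * pd e0 X q.
Proof. exact: (X11ix Hs q (L1 q) (L4 q) (hT1 q) (hT2 q) (hT3 q)). Qed.
Lemma L11y q : T q = 2 * pd e1 Y q.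
Proof. exact: (X11iy Hs q (L1 q) (L4 q) (hT1 q) (hT2 q) (hT3 q)). Qed.
Lemma L11z q : T q = 2 * pd e2 Z q.
Proof. exact: (X11iz Hs q (L1 q) (L4 q) (hT1 q) (hT2 q) (hT3 q)). Qed.

Lemma L6 q : pd uu X q = 0. Proof. exact: (X6 Hs q). Qed.
Lemma L10 q : pd uu Y q = 0. Proof. exact: (X10 Hs q). Qed.
Lemma L9 q : pd uu Z q = 0. Proof. exact: (X9 Hs q). Qed.
Lemma Xinv4 : invd uu X. Proof. exact: (inv_of0 (sxi ix) L6). Qed.
Lemma Yinv4 : invd uu Y. Proof. exact: (inv_of0 (sxi iy) L10). Qed.
Lemma Zinv4 : invd uu Z. Proof. exact: (inv_of0 (sxi iz) L9). Qed.

Lemma L13 q : pd uu A q = 0.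
Proof.
have := X13 Hs q.
by rewrite (pd_of_inv (inv_pdj Yinv4)) (pd_zero L10) !subr0.
Qed.
Lemma Ainv4 : invd uu A. Proof. exact: (inv_of0 (sm_pd sphi) L13). Qed.

Ltac gl := repeat match goal with H : _ = _ |- _ => revert H end;
  repeat match goal with |- context [pd ?k ?f ?q] => generalize (pd k f q) end;
  intros; subst.

Lemma mul_a0 (x : R) : a * x = 0 -> x = 0.
Proof. by move/eqP; rewrite mulf_eq0 (negbTE a0) => /eqP. Qed.

Lemma Y0 q : pd e0 Y q = 0.
Proof.
have E1 := X12iy Hs q.
have E2 := X12iy Hs (q + 1 *: ev R uu).
rewrite coord_uu in E2.
rewrite !(@sch _ phi e1 uu _ sphi) in E1 E2.
rewrite (inv_pdj Yinv4) (inv_pdj Yinv4) (inv_pdj Ainv4) in E2.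
rewrite !(inv_pdj (inv_pdj Yinv4)) in E2.
apply: mul_a0; move: E1 E2; generalize (q 0 uu) => w; gl; lra.
Qed.

Lemma Z0 q : pd e0 Z q = 0.
Proof.
have E1 := X12iz Hs q.
have E2 := X12iz Hs (q + 1 *: ev R uu).
rewrite coord_uu in E2.
rewrite !(@sch _ phi e2 uu _ sphi) in E1 E2.
rewrite (inv_pdj Zinv4) (inv_pdj Zinv4) (inv_pdj Ainv4) in E2.
rewrite !(inv_pdj (inv_pdj Zinv4)) in E2.
apply: mul_a0; move: E1 E2; generalize (q 0 uu) => w; gl; lra.
Qed.

Lemma X1' q : pd e1 X q = 0.
Proof. by have := X5 Hs q; rewrite Y0 add0r. Qed.
Lemma X2' q : pd e2 X q = 0.
Proof. by have := X7 Hs q; rewrite Z0 add0r. Qed.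

Lemma X14' (q : V) : a * q 0 uu * T q - pd e3 X q + a * phi q - a * q 0 uu * pd e0 X q
   + pd e0 A q + pd e0 A q
   - (pd e0 (pd e0 X) q + pd e1 (pd e1 X) q + pd e2 (pd e2 X) q) = 0.
Proof.
have := X14 Hs q (L1 q) (hT1 q) (hT2 q) (hT3 q).
by rewrite (@sch _ phi e0 uu _ sphi).
Qed.

Lemma lin_aux (x y t s : R) : x - y + s * t / 2 = 0 -> x = y + (- t / 2) * s.
Proof. move=> H; lra. Qed.

Lemma phi_lin q s : phi (q + s *: ev R uu) = phi q + (- T q / 2) * s.
Proof.
have E1 := X14' q.
have E2 := X14' (q + s *: ev R uu).
rewrite coord_uu Tinv4 (inv_pdj Xinv4) (inv_pdj Xinv4) (inv_pdj Ainv4) in E2.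
rewrite !(inv_pdj (inv_pdj Xinv4)) in E2.
have Ex := L11x q.
apply: lin_aux; apply: mul_a0.
move: E1 E2 Ex; generalize (q 0 uu) (phi q) (phi (q + s *: ev R uu)); gl; lra.
Qed.

Lemma A_eq q : A q = - T q / 2.
Proof. by apply: pd_lin => h; rewrite phi_lin. Qed.

Lemma dA0 q : pd e0 A q = 0.
Proof. by apply: pd_inv0 => h; rewrite !A_eq Tinv0. Qed.
Lemma dA1 q : pd e1 A q = 0.
Proof. by apply: pd_inv0 => h; rewrite !A_eq Tinv1. Qed.
Lemma dA2 q : pd e2 A q = 0.
Proof. by apply: pd_inv0 => h; rewrite !A_eq Tinv2. Qed.

Lemma X0' q : pd e0 X q = T q / 2. Proof. by rewrite L11x; field. Qed.
Lemma Y1 q : pd e1 Y q = T q / 2. Proof. by rewrite L11y; field. Qed.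
Lemma Z2 q : pd e2 Z q = T q / 2. Proof. by rewrite L11z; field. Qed.
Lemma dY q : derivable (pd e1 Y) q (ev R e2).
Proof. by apply: sm_der; apply: sm_pd. Qed.

Lemma dd0Y q : pd e0 (pd e0 Y) q = 0. Proof. exact: (pd_zero Y0). Qed.
Lemma dd1Y q : pd e1 (pd e1 Y) q = 0.
Proof. by apply: pd_inv0 => h; rewrite !Y1 Tinv1. Qed.
Lemma dd2Y q : pd e2 (pd e2 Y) q = 0.
Proof.
have X8' r : pd e2 Y r = - pd e1 Z r by have := X8 Hs r; move=> H; lra.
rewrite (@pd_aff _ _ (pd e1 Z) e2 (-1) q); last first.
- by move=> h; rewrite !X8' !mulN1r !opprK !addNr.
- by apply: sm_der; apply: sm_pd.
rewrite (@sch _ Z e1 e2 _ (sxi iz)).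
by rewrite (@pd_inv0 _ (pd e2 Z) e1 q) ?mulr0 // => h; rewrite !Z2 Tinv1.
Qed.
Lemma dd0Z q : pd e0 (pd e0 Z) q = 0. Proof. exact: (pd_zero Z0). Qed.
Lemma dd2Z q : pd e2 (pd e2 Z) q = 0.
Proof. by apply: pd_inv0 => h; rewrite !Z2 Tinv2. Qed.
Lemma dd1Z q : pd e1 (pd e1 Z) q = 0.
Proof.
have X8' r : pd e1 Z r = - pd e2 Y r by have := X8 Hs r; move=> H; lra.
rewrite (@pd_aff _ _ (pd e2 Y) e1 (-1) q); last first.
- by move=> h; rewrite !X8' !mulN1r !opprK !addNr.
- by apply: sm_der; apply: sm_pd.
rewrite (@sch _ Y e2 e1 _ (sxi iy)).
by rewrite (@pd_inv0 _ (pd e1 Y) e2 q) ?mulr0 // => h; rewrite !Y1 Tinv2.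
Qed.

Lemma Y3 q : pd e3 Y q = 0.
Proof.
have := X12iy Hs q.
rewrite (@sch _ phi e1 uu _ sphi) dA1 Y0 dd0Y dd1Y dd2Y.
move=> H; lra.
Qed.
Lemma Z3 q : pd e3 Z q = 0.
Proof.
have := X12iz Hs q.
rewrite (@sch _ phi e2 uu _ sphi) dA2 Z0 dd0Z dd1Z dd2Z.
move=> H; lra.
Qed.

Lemma T3 q : pd e3 T q = 0.
Proof.
rewrite (@pd_aff _ _ (pd e1 Y) e3 2 q); last first.
- by move=> h; rewrite !L11y !subrr.
- by apply: sm_der; apply: sm_pd.
by rewrite (@sch _ Y e1 e3 _ (sxi iy)) (pd_zero Y3) mulr0.
Qed.

Lemma pt_surj (q : V) : q = pt (q 0 e0) (q 0 e1) (q 0 e2) (q 0 e3) (q 0 uu).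
Proof.
apply/rowP => k; rewrite mxE.
by case: k => [[|[|[|[|[|k]]]]] Hk] //=; congr (q 0 _); apply: val_inj.
Qed.

Lemma const5 (f : V -> R) : smooth f ->
  (forall q, pd e0 f q = 0) -> (forall q, pd e1 f q = 0) -> (forall q, pd e2 f q = 0) ->
  (forall q, pd e3 f q = 0) -> (forall q, pd uu f q = 0) -> forall q, f q = f 0.
Proof.
move=> sf H0 H1 H2 H3 H4 q.
by rewrite (pt_surj q) (walk sf H0 H1 H2 H3 H4) !mul0r !addr0.
Qed.

Lemma Tc q : T q = T 0.
Proof.
apply: (const5 _ (sm_pd (sxi it))) => r.
- exact: (pd_of_inv Tinv0).
- exact: (pd_of_inv Tinv1).
- exact: (pd_of_inv Tinv2).
- exact: T3.
- exact: (pd_of_inv Tinv4).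
Qed.

Lemma Z1c q : pd e1 Z q = pd e1 Z 0.
Proof.
apply: (const5 _ (sm_pd (sxi iz))) => r.
- by rewrite (@sch _ Z e1 e0 _ (sxi iz)) (pd_zero Z0).
- exact: dd1Z.
- rewrite (@sch _ Z e1 e2 _ (sxi iz)).
  by apply: pd_inv0 => h; rewrite !Z2 Tinv1.
- by rewrite (@sch _ Z e1 e3 _ (sxi iz)) (pd_zero Z3).
- by rewrite (@sch _ Z e1 uu _ (sxi iz)) (pd_zero L9).
Qed.

Lemma PHI q : a * phi q = pd e3 X q - a * q 0 uu * T q / 2.
Proof.
have := X14' q.
rewrite dA0 X0' (pd_zero X1') (pd_zero X2').
rewrite (@pd_inv0 _ (pd e0 X) e0 q); last by move=> h; rewrite !X0' Tinv0.
move=> H; lra.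
Qed.

Lemma dphi i q : pd (iv i) phi q = a^-1 * pd (iv i) (pd e3 X) q.
Proof.
apply: pd_aff; first by apply: sm_der; apply: sm_pd.
move=> h.
have P r : phi r - a^-1 * pd e3 X r = - (r 0 uu * T r / 2).
  have := PHI r => E.
  apply: (mulfI a0); rewrite mulrBr mulrA mulfV ?a0 // mul1r E; ring.
by rewrite !P coord_iv Tc (Tc q).
Qed.

Lemma d3X0 q : pd e0 (pd e3 X) q = 0.
Proof.
rewrite (@sch _ X e3 e0 _ (sxi ix)).
by apply: pd_inv0 => h; rewrite !X0' Tc (Tc q).
Qed.
Lemma d3X1 q : pd e1 (pd e3 X) q = 0.
Proof. by rewrite (@sch _ X e3 e1 _ (sxi ix)) (pd_zero X1'). Qed.
Lemma d3X2 q : pd e2 (pd e3 X) q = 0.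
Proof. by rewrite (@sch _ X e3 e2 _ (sxi ix)) (pd_zero X2'). Qed.
Lemma d3X4 q : pd uu (pd e3 X) q = 0.
Proof. by rewrite (@sch _ X e3 uu _ (sxi ix)) (pd_zero L6). Qed.
Lemma d3X3 q : pd e3 (pd e3 X) q = 0.
Proof.
have := X15 Hs q.
rewrite (dphi ix) d3X0 mulr0 mulr0 addr0.
rewrite (@pd_zero _ (pd e0 phi)) => [|r]; last by rewrite (dphi ix) d3X0 mulr0.
rewrite (@pd_zero _ (pd e1 phi)) => [|r]; last by rewrite (dphi iy) d3X1 mulr0.
rewrite (@pd_zero _ (pd e2 phi)) => [|r]; last by rewrite (dphi iz) d3X2 mulr0.
rewrite !addr0 (dphi it) => /eqP; rewrite mulf_eq0 invr_eq0 (negbTE a0) /=.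
by move/eqP.
Qed.

Lemma X3c q : pd e3 X q = pd e3 X 0.
Proof.
apply: (const5 _ (sm_pd (sxi ix))) => r.
- exact: d3X0.
- exact: d3X1.
- exact: d3X2.
- exact: d3X3.
- exact: d3X4.
Qed.

Lemma fwd : exists c1 c2 c3 c4 c5 c6 c7 : R, forall x y z t u : R,
     [/\ xi ix (pt x y z t u) = c1 * x / 2 + c5 * t + c6,
         xi iy (pt x y z t u) = c1 * y / 2 + c3 * z + c4,
         xi iz (pt x y z t u) = - (c3 * y) + c1 * z / 2 + c7,
         xi it (pt x y z t u) = c1 * t + c2
       & phi (pt x y z t u) = - (c1 * u / 2) + c5 / a].
Proof.
exists (T 0), (tau 0), (- pd e1 Z 0), (Y 0), (pd e3 X 0), (X 0), (Z 0) => x y z t u.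
split.
- rewrite (@walk _ X (T 0 / 2) 0 0 (pd e3 X 0) 0 (sxi ix)).
  + ring.
  + by move=> q; rewrite X0' Tc.
  + exact: X1'.
  + exact: X2'.
  + exact: X3c.
  + exact: L6.
- rewrite (@walk _ Y 0 (T 0 / 2) (- pd e1 Z 0) 0 0 (sxi iy)).
  + ring.
  + exact: Y0.
  + by move=> q; rewrite Y1 Tc.
  + by move=> q; have := X8 Hs q; rewrite Z1c => H; lra.
  + exact: Y3.
  + exact: L10.
- rewrite (@walk _ Z 0 (- - pd e1 Z 0) (T 0 / 2) 0 0 (sxi iz)).
  + ring.
  + exact: Z0.
  + by move=> q; rewrite opprK Z1c.
  + by move=> q; rewrite Z2 Tc.
  + exact: Z3.
  + exact: L9.
- rewrite (@walk _ tau 0 0 0 (T 0) 0 (sxi it)).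
  + ring.
  + exact: L1.
  + exact: L2.
  + exact: L3.
  + exact: Tc.
  + exact: L4.
- have := PHI (pt x y z t u).
  rewrite X3c Tc.
  have -> : (pt x y z t u) 0 uu = u by rewrite mxE.
  move=> E; apply: (mulfI a0); rewrite E; field; exact: a0.
Qed.

End Fwd.

Section Bwd.
Variable R : realType.
Local Notation V := (V5 R).
Local Notation e0 := (iv ix).
Local Notation e1 := (iv iy).
Local Notation e2 := (iv iz).
Local Notation e3 := (iv it).

Section Aff.
Variables (f : V -> R) (b0 b1 b2 b3 b4 b5 : R).
Hypothesis Hf : forall q : V, f q = b0 * q 0 e0 + b1 * q 0 e1 + b2 * q 0 e2 + b3 * q 0 e3 + b4 * q 0 uu + b5.

Lemma affE k q : pd k f q = nth 0 [:: b0; b1; b2; b3; b4] k.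
Proof.
apply: pd_lin => h; rewrite !Hf !mxE /=.
by case: k => [[|[|[|[|[|k]]]]] Hk] //=; rewrite ?mulr0 ?mulr1 ?addr0; ring.
Qed.

Lemma aff0 q : pd e0 f q = b0. Proof. by rewrite affE. Qed.
Lemma aff1 q : pd e1 f q = b1. Proof. by rewrite affE. Qed.
Lemma aff2 q : pd e2 f q = b2. Proof. by rewrite affE. Qed.
Lemma aff3 q : pd e3 f q = b3. Proof. by rewrite affE. Qed.
Lemma aff4 q : pd uu f q = b4. Proof. by rewrite affE. Qed.
Lemma affdd j k q : pd j (pd k f) q = 0.
Proof. by apply: pd_inv0 => h; rewrite !affE. Qed.
Lemma TD2a u1 u2 i j q : TD2 f u1 u2 i j q = u2 i j * b4.
Proof. by rewrite /TD2 !affdd aff4; ring. Qed.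
Lemma TD1x u1 q : TD1 f u1 ix q = b0 + u1 ix * b4.
Proof. by rewrite /TD1 aff0 aff4. Qed.
Lemma TD1y u1 q : TD1 f u1 iy q = b1 + u1 iy * b4.
Proof. by rewrite /TD1 aff1 aff4. Qed.
Lemma TD1z u1 q : TD1 f u1 iz q = b2 + u1 iz * b4.
Proof. by rewrite /TD1 aff2 aff4. Qed.
Lemma TD1t u1 q : TD1 f u1 it q = b3 + u1 it * b4.
Proof. by rewrite /TD1 aff3 aff4. Qed.
End Aff.

Arguments TD2a {f b0 b1 b2 b3 b4 b5}. Arguments TD1x {f b0 b1 b2 b3 b4 b5}.
Arguments TD1y {f b0 b1 b2 b3 b4 b5}. Arguments TD1z {f b0 b1 b2 b3 b4 b5}.
Arguments TD1t {f b0 b1 b2 b3 b4 b5}.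
Arguments aff0 {f b0 b1 b2 b3 b4 b5}. Arguments aff1 {f b0 b1 b2 b3 b4 b5}.
Arguments aff2 {f b0 b1 b2 b3 b4 b5}. Arguments aff3 {f b0 b1 b2 b3 b4 b5}.
Arguments aff4 {f b0 b1 b2 b3 b4 b5}. Arguments affdd {f b0 b1 b2 b3 b4 b5}.

Lemma pt_surj' (q : V) : q = pt (q 0 e0) (q 0 e1) (q 0 e2) (q 0 e3) (q 0 uu).
Proof.
apply/rowP => k; rewrite mxE.
by case: k => [[|[|[|[|[|k]]]]] Hk] //=; congr (q 0 _); apply: val_inj.
Qed.

Lemma bwd (a : R) (xi : 'I_4 -> V -> R) (phi : V -> R) (ha : 0 < a)
  (c1 c2 c3 c4 c5 c6 c7 : R) :
  (forall x y z t u : R,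
     [/\ xi ix (pt x y z t u) = c1 * x / 2 + c5 * t + c6,
         xi iy (pt x y z t u) = c1 * y / 2 + c3 * z + c4,
         xi iz (pt x y z t u) = - (c3 * y) + c1 * z / 2 + c7,
         xi it (pt x y z t u) = c1 * t + c2
       & phi (pt x y z t u) = - (c1 * u / 2) + c5 / a]) ->
  is_symmetry a xi phi.
Proof.
move=> Hc.
have HX q : xi ix q = (c1 / 2) * q 0 e0 + 0 * q 0 e1 + 0 * q 0 e2 + c5 * q 0 e3 + 0 * q 0 uu + c6.
  by rewrite {1}(pt_surj' q); case: (Hc (q 0 e0) (q 0 e1) (q 0 e2) (q 0 e3) (q 0 uu)) => -> _ _ _ _; ring.
have HY q : xi iy q = 0 * q 0 e0 + (c1 / 2) * q 0 e1 + c3 * q 0 e2 + 0 * q 0 e3 + 0 * q 0 uu + c4.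
  by rewrite {1}(pt_surj' q); case: (Hc (q 0 e0) (q 0 e1) (q 0 e2) (q 0 e3) (q 0 uu)) => _ -> _ _ _; ring.
have HZ q : xi iz q = 0 * q 0 e0 + (- c3) * q 0 e1 + (c1 / 2) * q 0 e2 + 0 * q 0 e3 + 0 * q 0 uu + c7.
  by rewrite {1}(pt_surj' q); case: (Hc (q 0 e0) (q 0 e1) (q 0 e2) (q 0 e3) (q 0 uu)) => _ _ -> _ _; ring.
have HT q : xi it q = 0 * q 0 e0 + 0 * q 0 e1 + 0 * q 0 e2 + c1 * q 0 e3 + 0 * q 0 uu + c2.
  by rewrite {1}(pt_surj' q); case: (Hc (q 0 e0) (q 0 e1) (q 0 e2) (q 0 e3) (q 0 uu)) => _ _ _ -> _; ring.
have HP q : phi q = 0 * q 0 e0 + 0 * q 0 e1 + 0 * q 0 e2 + 0 * q 0 e3 + (- c1 / 2) * q 0 uu + c5 / a.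
  by rewrite {1}(pt_surj' q); case: (Hc (q 0 e0) (q 0 e1) (q 0 e2) (q 0 e3) (q 0 uu)) => _ _ _ _ ->; ring.
move=> p u1 u2 Hsym Hzk.
rewrite /prZK !pr1E !pr2E.
rewrite ?(TD2a HX) ?(TD2a HY) ?(TD2a HZ) ?(TD2a HT) ?(TD2a HP).
rewrite ?(TD1x HX) ?(TD1x HY) ?(TD1x HZ) ?(TD1x HT) ?(TD1x HP).
rewrite ?(TD1y HX) ?(TD1y HY) ?(TD1y HZ) ?(TD1y HT) ?(TD1y HP).
rewrite ?(TD1z HX) ?(TD1z HY) ?(TD1z HZ) ?(TD1z HT) ?(TD1z HP).
rewrite ?(TD1t HX) ?(TD1t HY) ?(TD1t HZ) ?(TD1t HT) ?(TD1t HP) (HP p).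
rewrite (Hsym iz iy).
move: Hzk; rewrite /zk.
have a0 : a != 0 by exact: lt0r_neq0.
move: (u1 ix) (u1 iy) (u1 iz) (u1 it) (u2 ix ix) (u2 iy iy) (u2 iz iz) (u2 iy iz) (p 0 uu).
move: (u2 ix iy) (u2 ix iz) (u2 ix it) (u2 iy ix) (u2 iy it) (u2 iz ix) (u2 iz it).
move: (p 0 e0) (p 0 e1) (p 0 e2) (p 0 e3).
move=> ? ? ? ? ? ? ? ? ? ? ? ux uy uz ut xx yy zz yz w Hz.
apply: (@eq_trans _ _ ((- (3 * c1) / 2) * (ut + a * w * ux + xx + yy + zz))); last first.
  by rewrite Hz mulr0.
by field.
Qed.

End Bwd.

Theorem mainTheorem1 (R : realType) (a : R) (ha : 0 < a)
    (xi : 'I_4 -> V5 R -> R) (phi : V5 R -> R) :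
  (forall i, smooth (xi i)) -> smooth phi ->
  (is_symmetry a xi phi <->
   exists c1 c2 c3 c4 c5 c6 c7 : R, forall x y z t u : R,
     [/\ xi ix (pt x y z t u) = c1 * x / 2 + c5 * t + c6,
         xi iy (pt x y z t u) = c1 * y / 2 + c3 * z + c4,
         xi iz (pt x y z t u) = - (c3 * y) + c1 * z / 2 + c7,
         xi it (pt x y z t u) = c1 * t + c2
       & phi (pt x y z t u) = - (c1 * u / 2) + c5 / a]).
Proof.
move=> sxi sphi; split.
- by move=> Hs; exact: (@fwd _ _ _ _ ha sxi sphi Hs).
- by move=> [c1 [c2 [c3 [c4 [c5 [c6 [c7 Hc]]]]]]]; exact: (@bwd _ _ _ _ ha _ _ _ _ _ _ _ Hc).
Qed.
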